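(* For every (labelled) tree $T$ there exists a $T$-peeling mapping.
   Context: For a tree $T$, let $\mathcal{S}(T)$ be the family of all subtrees of $T$ (connected subgraphs of $T$, which are trees). A mapping $\nu:\mathcal{S}(T)\to 2^{V(T)}$ is $T$-peeling if (i) $\nu(\{v\})=\{v\}$ for every single-vertex subtree $\{v\}$, $v\in V(T)$, and (ii) for every subtree $T'$ with $|V(T')|\ge 2$ we have $\nu(T')=\{u,w\}$ where $u,w$ are two distinct leaves of $T'$ such that $u\in\nu(T'-w)$ and $w\in\nu(T'-u)$. *)

(* Defs.v *)
From mathcomp Require Import all_boot.
Set Implicit Arguments. Unset Strict Implicit. Unset Printing Implicit Defensive.

Section Trees.
Variable V : finType.

Definition simple_graph (e : rel V) : Prop := symmetric e /\ irreflexive e.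

Definition induced (e : rel V) (S : {set V}) : rel V :=
  [rel x y | [&& x \in S, y \in S & e x y]].

Definition acyclic (e : rel V) : Prop :=
  forall c : seq V, 3 <= size c -> ~~ ucycleb e c.

Definition is_tree (e : rel V) : Prop :=
  [/\ simple_graph e, 0 < #|V|, (forall x y, connect e x y) & acyclic e].

(* subtrees of a tree, identified with their (nonempty) vertex sets inducing
   a connected subgraph; in a tree the induced subgraph is the only connected
   subgraph on such a vertex set. *)
Definition is_subtree (e : rel V) (S : {set V}) : Prop :=
  S != set0 /\ {in S &, forall x y, connect (induced e S) x y}.

Definition is_leaf (e : rel V) (S : {set V}) (u : V) : bool :=
  (u \in S) && (#|[set v in S | e u v]| == 1).

Definition peeling (e : rel V) (nu : {set V} -> {set V}) : Prop :=
  (forall v : V, nu [set v] = [set v]) /\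
  (forall S : {set V}, is_subtree e S -> 2 <= #|S| ->
     exists u w : V, [/\ u != w, is_leaf e S u, is_leaf e S w &
                        nu S = [set u; w]] /\
                     u \in nu (S :\ w) /\ w \in nu (S :\ u)).
End Trees.

(* Main.v *)
Require Import Defs.
From mathcomp Require Import all_boot.
Set Implicit Arguments. Unset Strict Implicit. Unset Printing Implicit Defensive.

Lemma path_closed (T : Type) (r : rel T) (P : pred T) x p :
  (forall y z, P y -> r y z -> P z) -> P x -> path r x p -> P (last x p).
Proof.
move=> cl; elim: p x => [|y p IH] x //= Px /andP[rxy pp].
exact: IH (cl _ _ Px rxy) pp.
Qed.

Lemma nbr1 (V : finType) (e : rel V) S a b z :
  is_leaf e S a -> b \in S -> e a b -> z \in S -> e a z -> z = b.
Proof.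
case/andP=> _ /cards1P[c Hc] bS eab zS eaz.
have : b \in [set v in S | e a v] by rewrite inE bS eab.
have : z \in [set v in S | e a v] by rewrite inE zS eaz.
by rewrite Hc !inE => /eqP -> /eqP ->.
Qed.

Lemma adj_leaves (V : finType) (e : rel V) S a b :
  simple_graph e -> is_subtree e S -> is_leaf e S a -> is_leaf e S b -> e a b ->
  S \subset [set a; b].
Proof.
move=> [sym irr] [_ con] la lb eab.
have aS : a \in S by case/andP: la.
have bS : b \in S by case/andP: lb.
apply/subsetP => x xS.
have /connectP [p pp ->] := con a x aS xS.
apply: (path_closed (P := mem [set a; b])) pp; last by rewrite !inE eqxx.
move=> y z; rewrite !inE => /orP[] /eqP -> /andP[yS /andP[zS ez]].
  by rewrite (nbr1 la bS eab zS ez) eqxx orbT.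
by rewrite (nbr1 lb aS _ zS ez) ?eqxx // sym.
Qed.

Lemma end_leaf (V : finType) (e : rel V) S x y q :
  simple_graph e -> acyclic e -> uniq (x :: y :: q) ->
  path (induced e S) x (y :: q) ->
  (forall v, induced e S v x -> v \in x :: y :: q) -> is_leaf e S x.
Proof.
move=> [sym irr] acy un pth mx.
have /andP[xS /andP[yS exy]] : induced e S x y by case/andP: pth.
rewrite /is_leaf xS /=; apply/cards1P; exists y; apply/setP => v; rewrite !inE.
have [->|nvy] := eqVneq v y; first by rewrite yS exy.
apply/negP => /andP[vS exv].
have : v \in x :: y :: q by apply: mx; rewrite /induced /= vS xS sym.
rewrite !inE (negbTE nvy) /= => /orP[/eqP evx|vq].
  by move: exv; rewrite evx irr.
case/splitPr: vq pth un => q1 q2 pth un.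
have := acy (x :: y :: rcons q1 v); rewrite /= size_rcons ltnS ltnS ltn0Sn => /(_ isT).
apply/negPn; rewrite /ucycleb.
rewrite negbK; apply/andP; split.
  rewrite /cycle rcons_path; apply/andP; split; last by rewrite /= last_rcons sym.
  move: pth; rewrite -cat_rcons -cat_cons cat_path => /andP[p1 _].
  apply: sub_path p1 => a b /andP[_ /andP[_ ->]] //.
by move: un; rewrite -cat_rcons -!cat_cons cat_uniq => /andP[].
Qed.

Definition goodp (T : eqType) (r : rel T) (s : seq T) :=
  uniq s && (if s is x :: p then path r x p else true).

Lemma head_leaf (V : finType) (e : rel V) S x p :
  simple_graph e -> acyclic e -> goodp (induced e S) (x :: p) -> p != [::] ->
  (forall s, goodp (induced e S) s -> size s <= (size p).+1) -> is_leaf e S x.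
Proof.
move=> sg acy /andP[un pth]; case: p un pth => [|y q] // un pth _ mx.
refine (end_leaf sg acy un pth _); move=> v rvx.
apply/negPn/negP => nv.
have := mx (v :: [:: x, y & q]); rewrite /goodp.
have -> : uniq [:: v, x, y & q] by rewrite cons_uniq nv un.
have -> : path (induced e S) v [:: x, y & q] by rewrite /= rvx -/(path _ x (y :: q)) pth.
by move=> /(_ isT); rewrite /= ltnn.
Qed.

Lemma goodp_rev (T : eqType) (r : rel T) x p :
  symmetric r -> goodp r (x :: p) -> goodp r (last x p :: rev (belast x p)).
Proof.
move=> sym /andP[un pth]; rewrite /goodp.
have E : last x p :: rev (belast x p) = rev (x :: p) by rewrite [x :: p]lastI rev_rcons.
rewrite E rev_uniq un /= rev_path.
by rewrite (@eq_path _ _ r _ x p) // => a b; rewrite sym.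
Qed.

Lemma two_leaves (V : finType) (e : rel V) S :
  simple_graph e -> acyclic e -> is_subtree e S -> 1 < #|S| ->
  exists a b, [/\ a != b, is_leaf e S a & is_leaf e S b].
Proof.
move=> sg acy [_ con] /card_gt1P [a [b [aS bS nab]]].
have [sym irr] := sg.
set r := induced e S.
have [s2 [gs2 ss2]] : exists s2, goodp r s2 /\ size s2 = 2.
  have /connectP [p pp eb] := con a b aS bS.
  case: p pp eb => [|y p] /=; first by move=> _ eb; rewrite eb eqxx in nab.
  move=> /andP[ray _] _; exists [:: a; y]; split => //.
  rewrite /goodp /= inE; apply/andP; split; last by rewrite andbT.
  rewrite andbT; apply/eqP => eay; move: ray; rewrite /r /induced /= eay irr.
  by rewrite !andbF.
pose P n := [exists t : n.-tuple V, goodp r t].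
have ex2 : exists n, P n.
  by exists (size s2); apply/existsP; exists (in_tuple s2).
have ub : forall n, P n -> n <= #|V|.
  move=> n /existsP [t /andP[un _]].
  by rewrite -(size_tuple t) -(card_uniqP un) max_card.
case: (ex_maxnP ex2 ub) => n /existsP [t gt] mx.
have mx' : forall s, goodp r s -> size s <= n.
  move=> s gs; apply: mx; apply/existsP; exists (in_tuple s); exact: gs.
have n2 : 2 <= n by rewrite -ss2 mx'.
have gt' : goodp r (tval t) := gt.
have st : size (tval t) = n := size_tuple t.
move: (tval t) gt' st => [|x p]; first by move=> _ st; rewrite -st in n2.
move=> {}gt /= st.
have pn : p != [::] by case: p st gt => // st; rewrite -st in n2.
have l1 : is_leaf e S x.
  by apply: (head_leaf sg acy gt pn) => s /mx'; rewrite st.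
have l2 : is_leaf e S (last x p).
  have symr : symmetric r by move=> u v; rewrite /r /induced /= andbCA sym.
  have gr := goodp_rev symr gt.
  apply: (head_leaf sg acy gr).
    by rewrite -size_eq0 size_rev size_belast size_eq0.
  by move=> s /mx'; rewrite size_rev size_belast st.
exists x, (last x p); split => //.
case: p pn gt {mx' st l1 l2} => // y q _ /andP[un _].
apply/eqP => exl; move: un; rewrite /= exl.
by case/andP; rewrite [last x _]/= mem_last.
Qed.

Definition rk (V : finType) (x : V) : nat := enum_rank x.

Lemma rk_inj (V : finType) : injective (@rk V).
Proof. by move=> x y /val_inj /enum_rank_inj. Qed.

Lemma minex (V : finType) (A : {set V}) x0 :
  x0 \in A -> exists2 u, u \in A & forall y, y \in A -> rk u <= rk y.
Proof.
move=> x0A; case: (@arg_minnP V x0 (fun x => x \in A) (@rk V) x0A) => u uA um.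
by exists u.
Qed.

Lemma min2 (V : finType) (A : {set V}) : 1 < #|A| ->
  exists u w, [/\ u != w, u \in A, w \in A &
    [set x in A | #|[set y in A | rk y < rk x]| < 2] = [set u; w]] /\
    [set y in A | rk y < rk u] = set0 /\
    [set y in A | rk y < rk w] \subset [set u].
Proof.
move=> /card_gt1P [a [b [aA bA nab]]].
have [u uA um] := minex aA.
have [x1 x1A] : exists x1, x1 \in A :\ u.
  have [eau|nau] := eqVneq a u.
    by exists b; rewrite !inE bA andbT -eau eq_sym.
  by exists a; rewrite !inE aA andbT.
have [w /setD1P [nwu wA] wm] := minex x1A.
have ltr x y : rk x <= rk y -> x != y -> rk x < rk y.
  by move=> le nxy; rewrite ltn_neqAle le andbT; apply: contra nxy => /eqP /rk_inj ->.
have b0 : [set y in A | rk y < rk u] = set0.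
  apply/setP => y; rewrite !inE; apply/negbTE/negP => /andP[yA lt].
  by have := um y yA; rewrite leqNgt lt.
have b1 : [set y in A | rk y < rk w] \subset [set u].
  apply/subsetP => y; rewrite !inE => /andP[yA lt]; apply/negPn/negP => nyu.
  by have := wm y; rewrite !inE nyu yA leqNgt lt => /(_ isT).
exists u, w; split; last by [].
split => //; first by rewrite eq_sym.
apply/setP => x; rewrite !inE.
have [->|nxu] := eqVneq x u; first by rewrite uA b0 cards0.
have [->|nxw] := eqVneq x w.
  by rewrite wA ltnS (leq_trans (subset_leq_card b1)) ?cards1.
rewrite /=; apply/negbTE; rewrite negb_and -leqNgt; case xA: (x \in A) => //=.
have sub : [set u; w] \subset [set y in A | rk y < rk x].
  apply/subsetP => y; rewrite !inE => /orP[] /eqP ->.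
    by rewrite uA ltr ?um // eq_sym.
  by rewrite wA ltr ?wm ?inE ?xA ?andbT // eq_sym.
by apply: leq_trans (subset_leq_card sub); rewrite cards2 eq_sym nwu.
Qed.

Definition leaves (V : finType) (e : rel V) (S : {set V}) := [set x | is_leaf e S x].
Definition nuf (V : finType) (e : rel V) (S : {set V}) : {set V} :=
  if #|S| <= 1 then S
  else [set x in leaves e S | #|[set y in leaves e S | rk y < rk x]| < 2].

Lemma nbrD (V : finType) (e : rel V) S b y :
  ~~ e y b -> [set v in S :\ b | e y v] = [set v in S | e y v].
Proof.
move=> nyb; apply/setP => v; rewrite !inE.
by have [->|] := eqVneq v b; rewrite ?(negbTE nyb) ?andbF.
Qed.

Lemma leafD (V : finType) (e : rel V) S b y :
  ~~ e y b -> y != b -> is_leaf e (S :\ b) y = is_leaf e S y.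
Proof. by move=> nyb nyb'; rewrite /is_leaf nbrD // !inE nyb'. Qed.

Lemma keyK (V : finType) (e : rel V) S a b :
  simple_graph e -> is_subtree e S -> is_leaf e S a -> is_leaf e S b -> a != b ->
  [set y in leaves e S | rk y < rk a] :\ b = set0 -> a \in nuf e (S :\ b).
Proof.
move=> sg st la lb nab b0; have [sym irr] := sg.
have aS : a \in S by case/andP: la.
rewrite /nuf; case: ifP => small; first by rewrite !inE nab aS.
have neab : ~~ e a b.
  apply/negP => eab; move/negbT: small; rewrite -ltnNge.
  have /subsetP sub := adj_leaves sg st la lb eab.
  have : S :\ b \subset [set a].
    apply/subsetP => x; rewrite !inE => /andP[nxb xS].
    by move: (sub x xS); rewrite !inE (negbTE nxb) orbF.
  by move/subset_leq_card; rewrite cards1 => h1; rewrite ltnNge h1.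
have la' : is_leaf e (S :\ b) a by rewrite leafD.
case/andP: (lb) => bS /cards1P [p hp].
rewrite inE; apply/andP; split; first by rewrite inE.
have sub : [set y in leaves e (S :\ b) | rk y < rk a] \subset [set p].
  apply/subsetP => y; rewrite !inE => /andP[ly lt].
  have /andP[] := ly; rewrite !inE => /andP[nyb yS] _.
  case eby: (e b y).
    have : y \in [set v in S | e b v] by rewrite inE yS eby.
    by rewrite hp inE.
  have nyb' : ~~ e y b by rewrite sym eby.
  move: ly; rewrite leafD // => ly.
  have : y \in [set y in leaves e S | rk y < rk a] :\ b by rewrite !inE nyb ly lt.
  by rewrite b0 inE.
by rewrite (leq_ltn_trans (subset_leq_card sub)) ?cards1.
Qed.
Unset Implicit Arguments.

Theorem lemma4p3 (V : finType) (e : rel V) :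
  is_tree e -> exists nu : {set V} -> {set V}, peeling e nu.
Proof.
case=> sg _ _ acy; exists (nuf e); split.
  by move=> v; rewrite /nuf cards1 leqnn.
move=> S st S2.
have [a [b [nab la lb]]] := two_leaves sg acy st S2.
have A2 : 1 < #|leaves e S|.
  by apply/card_gt1P; exists a, b; rewrite !inE.
have [u [w [[nuw uA wA eq] [b0 b1]]]] := min2 A2.
move: uA wA; rewrite !inE => lu lw.
exists u, w; split; first split => //; last split.
- by rewrite /nuf leqNgt S2 /=.
- by apply: keyK => //; rewrite b0 set0D.
- apply: keyK => //; first by rewrite eq_sym.
  by apply/eqP; rewrite setD_eq0.
Qed.
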